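(* Let $H\le\widetilde{\mathcal{P}}_t$ be an abelian subgroup of $t$-qubit Pauli strings, let $C(H)\le\widetilde{\mathcal{P}}_t$ be its centralizer, and let $\widetilde{\mathcal{Q}}_t=\{\mathtt{I},\mathtt{X},\mathtt{Y}\}^{\times t}\subseteq\widetilde{\mathcal{P}}_t$ be the set of $\mathtt{Z}$-free strings. Then $$\lvert\widetilde{\mathcal{Q}}_t\cap C(H)\rvert=\frac{1}{\lvert H\rvert}\sum_{h\in H}3^{n_I(h)}(-1)^{n_Z(h)},$$ where $n_I(h)$ and $n_Z(h)$ denote the number of tensor positions at which $h$ equals $\mathtt{I}$ and $\mathtt{Z}$, respectively.
   Context: $\widetilde{\mathcal{P}}_t$ is the group of $t$-qubit Pauli operators modulo phases $\{\pm1,\pm i\}$, whose elements are strings in $\{\mathtt{I},\mathtt{X},\mathtt{Y},\mathtt{Z}\}^t$. A subgroup is abelian if its elements pairwise commute as operators (on representatives), and $C(H)$ is the set of strings in $\widetilde{\mathcal{P}}_t$ commuting with every element of $H$. *)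

(* Defs.v *)
From HB Require Import structures.
From mathcomp Require Import all_boot all_order all_algebra.
Set Implicit Arguments. Unset Strict Implicit. Unset Printing Implicit Defensive.

Inductive pauli := PI | PX | PY | PZ.

Definition pauli_to_ord (p : pauli) : 'I_4 :=
  match p with PI => inord 0 | PX => inord 1 | PY => inord 2 | PZ => inord 3 end.
Definition ord_to_pauli (i : 'I_4) : pauli :=
  match val i with 0 => PI | 1 => PX | 2 => PY | _ => PZ end.
Lemma pauli_ordK : cancel pauli_to_ord ord_to_pauli.
Proof. by case; rewrite /ord_to_pauli /= inordK. Qed.
HB.instance Definition _ := Equality.copy pauli (can_type pauli_ordK).
HB.instance Definition _ := Choice.copy pauli (can_type pauli_ordK).
HB.instance Definition _ := Countable.copy pauli (can_type pauli_ordK).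
HB.instance Definition _ := Finite.copy pauli (can_type pauli_ordK).

(* Product of letters modulo phases {±1, ±i}. *)
Definition pmul (a b : pauli) : pauli :=
  match a, b with
  | PI, c | c, PI => c
  | PX, PX | PY, PY | PZ, PZ => PI
  | PX, PY | PY, PX => PZ
  | PY, PZ | PZ, PY => PX
  | PZ, PX | PX, PZ => PY
  end.

Definition anticomm1 (a b : pauli) : bool := [&& a != PI, b != PI & a != b].

Definition pstring (t : nat) := {ffun 'I_t -> pauli}.

Definition pid (t : nat) : pstring t := [ffun => PI].
Definition psmul (t : nat) (g h : pstring t) : pstring t :=
  [ffun i => pmul (g i) (h i)].

(* Representatives commute as operators iff the number of anticommuting
   tensor positions is even. *)
Definition pcommute (t : nat) (g h : pstring t) : bool :=
  ~~ odd #|[set i | anticomm1 (g i) (h i)]|.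

Definition is_psubgroup (t : nat) (H : {set pstring t}) : Prop :=
  pid t \in H /\ {in H &, forall g h, psmul g h \in H}.

Definition is_abelian (t : nat) (H : {set pstring t}) : Prop :=
  {in H &, forall g h, pcommute g h}.

Definition centralizer (t : nat) (H : {set pstring t}) : {set pstring t} :=
  [set g : pstring t | [forall h in H, pcommute g h]].

Definition Zfree (t : nat) : {set pstring t} :=
  [set g : pstring t | [forall i, g i != PZ]].

Definition nI (t : nat) (h : pstring t) : nat := #|[set i | h i == PI]|.
Definition nZ (t : nat) (h : pstring t) : nat := #|[set i | h i == PZ]|.

(* Main.v *)
Require Import Defs.
From mathcomp Require Import all_boot all_order all_algebra.
From mathcomp Require Import lra.
Set Implicit Arguments. Unset Strict Implicit.
Import GRing.Theory Num.Theory.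
Local Open Scope ring_scope.

Definition s1 (a b : pauli) : rat := if anticomm1 a b then -1 else 1.
Definition w1 (a b : pauli) : rat := if a == PZ then 0 else s1 a b.
Definition sgn (t : nat) (g h : pstring t) : rat := \prod_i s1 (g i) (h i).

Lemma peq (a b : pauli) : (a == b) =
  match a, b with PI,PI|PX,PX|PY,PY|PZ,PZ => true | _,_ => false end.
Proof. by case: a; case: b; rewrite ?eqxx //; apply/eqP; discriminate. Qed.

Lemma s1_mul a b c : s1 a (pmul b c) = s1 a b * s1 a c.
Proof.
by case: a; case: b; case: c; rewrite /s1 /anticomm1 !peq /= ?mulr1 ?mul1r ?mulrNN.
Qed.

Lemma sumP (F : pauli -> rat) : \sum_a F a = F PI + F PX + F PY + F PZ.
Proof.
have pe : perm_eq (index_enum pauli) [:: PI; PX; PY; PZ].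
  apply: uniq_perm; first exact: index_enum_uniq; first by rewrite /= !inE !peq.
  by move=> x; rewrite mem_index_enum !inE !peq; case: x.
by rewrite (perm_big _ pe) unlock /= addr0 !addrA.
Qed.

Lemma sgn_def t (g h : pstring t) : sgn g h = if pcommute g h then 1 else -1.
Proof.
rewrite /sgn /pcommute.
have -> : \prod_i s1 (g i) (h i) =
   \prod_(i in [set i | anticomm1 (g i) (h i)]) (-1 : rat).
  by rewrite [RHS]big_mkcond; apply: eq_bigr => i _; rewrite inE /s1.
by rewrite prodr_const -signr_odd; case: odd.
Qed.

Lemma psmulK t (h0 h : pstring t) : psmul h0 (psmul h0 h) = h.
Proof. by apply/ffunP => i; rewrite !ffunE; case: (h0 i); case: (h i). Qed.

Lemma sgn_mul t (g h0 h : pstring t) : sgn g (psmul h0 h) = sgn g h0 * sgn g h.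
Proof. by rewrite /sgn -big_split; apply: eq_bigr => i _; rewrite ffunE s1_mul. Qed.

Lemma char_sum t (H : {set pstring t}) g : is_psubgroup H ->
  \sum_(h in H) sgn g h = if g \in centralizer H then #|H|%:R else 0.
Proof.
case=> H1 Hm; case: ifP => gC.
  rewrite -sumr_const; apply: eq_bigr => h hH; rewrite sgn_def.
  by rewrite inE in gC; rewrite (forall_inP gC).
rewrite inE in gC; move/negbT: gC => /forall_inPn [h0 h0H nc].
set S := \sum_(h in H) _.
have E : S = - S.
  rewrite {1}/S (reindex_inj (can_inj (psmulK h0))) /= /S -sumrN.
  apply: eq_big => h.
    apply/idP/idP => hH; last exact: Hm h0 h h0H hH.
    by rewrite -(psmulK h0 h); apply: Hm h0 _ h0H hH.
  by move=> _; rewrite sgn_mul sgn_def (negbTE nc) mulN1r.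
lra.
Qed.

Lemma prod_cnt t (P : pred 'I_t) (a : rat) :
  \prod_i (if P i then a else 1) = a ^+ #|[set i | P i]|.
Proof.
rewrite -prodr_const [RHS]big_mkcond; apply: eq_bigr => i _; by rewrite inE.
Qed.

Lemma c_expand t (h : pstring t) :
  3%:R ^+ nI h * (-1) ^+ nZ h = \sum_(g : pstring t) \prod_i w1 (g i) (h i) :> rat.
Proof.
rewrite -(bigA_distr_bigA (fun i a => w1 a (h i))) /nI /nZ -!prod_cnt -big_split.
apply: eq_bigr => i _; rewrite sumP /w1 /s1 /anticomm1 !peq.
by case: (h i) => /=; rewrite ?mulr1 ?mul1r ?addr0 ?add0r; lra.
Qed.

Lemma g_sum t (H : {set pstring t}) (g : pstring t) : is_psubgroup H ->
  \sum_(h in H) \prod_i w1 (g i) (h i) =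
  if g \in Zfree t :&: centralizer H then #|H|%:R else 0.
Proof.
move=> HH; rewrite inE; case gZ: (g \in Zfree t) => /=.
  rewrite -char_sum //; apply: eq_bigr => h _; apply: eq_bigr => i _.
  by rewrite /w1 inE in gZ *; rewrite (negbTE (forallP gZ i)).
rewrite inE in gZ; move/negbT: gZ => /forallPn [i]; rewrite negbK => /eqP gi.
by apply: big1 => h _; rewrite (bigD1 i) //= /w1 gi eqxx mul0r.
Qed.

Theorem theorem8 (t : nat) (H : {set pstring t}) :
  is_psubgroup H -> is_abelian H ->
  (#|Zfree t :&: centralizer H|)%:R =
    (#|H|%:R)^-1 * \sum_(h in H) (3%:R ^+ nI h * (-1) ^+ nZ h) :> rat.
Proof.
move=> HH _.
rewrite (eq_bigr _ (fun h _ => c_expand h)) exchange_big /=.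
rewrite (eq_bigr _ (fun g _ => g_sum g HH)).
have -> : \sum_(g : pstring t) (if g \in Zfree t :&: centralizer H then #|H|%:R else 0)
   = \sum_(g in Zfree t :&: centralizer H) (#|H|%:R : rat) by rewrite [RHS]big_mkcond.
have H0 : (#|H|%:R : rat) != 0.
  rewrite pnatr_eq0 -lt0n card_gt0; apply/set0Pn; exists (pid t); by case: HH.
by rewrite sumr_const mulrnAr mulVf.
Qed.
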